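(* Let $P$ be a monotone irreducible positive recurrent stochastic kernel on $\mathbb{N}=\{1,2,\dots\}$ with stationary distribution $\pi$. Let $X=(X_n)_{n\ge0}$ be the Markov chain with kernel $P$ and, for $N\ge1$, $\tau_{(N)}=\inf\{n\ge 0: X_n\ge N\}$. Then $$\forall\, y,z\in\mathbb{N}:\quad \lim_{n,N\to\infty}\frac{\mathbb{P}_y(\tau_{(N)}>n)}{\mathbb{P}_z(\tau_{(N)}>n)}=1,$$ where the limit is taken jointly as both $n\to\infty$ and $N\to\infty$.
   Context: A stochastic kernel $P$ on $\mathbb{N}$ is monotone if for every $y\in\mathbb{N}$ the map $x\mapsto\sum_{z\le y}P(x,z)$ is decreasing in $x$. $\mathbb{P}_x$ denotes the law of the chain started at $x$. The stationary distribution $\pi$ satisfies $\pi(i)>0$, $\sum_i\pi(i)=1$, $\pi' P=\pi'$. *)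

(* Defs.v *)
From Stdlib Require Import Reals Arith.
From Coquelicot Require Import Coquelicot.
Open Scope R_scope.

(* States: the natural numbers.  The paper's state space {1,2,...} is
   relabelled as {0,1,...} (x |-> x-1). *)

Fixpoint fsum (f : nat -> R) (n : nat) : R :=
  match n with
  | O => 0
  | S k => fsum f k + f k
  end.

Definition stochastic (P : nat -> nat -> R) : Prop :=
  (forall x y, 0 <= P x y) /\ (forall x, is_series (fun y => P x y) 1).

Definition monotone_kernel (P : nat -> nat -> R) : Prop :=
  forall y x x', (x <= x')%nat ->
    fsum (P x') (S y) <= fsum (P x) (S y).

Inductive leads_to (P : nat -> nat -> R) : nat -> nat -> Prop :=
  | leads_refl x : leads_to P x x
  | leads_step x y z : 0 < P x y -> leads_to P y z -> leads_to P x z.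

Definition irreducible (P : nat -> nat -> R) : Prop :=
  forall x y, leads_to P x y.

Definition stationary_distribution (P : nat -> nat -> R) (pi : nat -> R) : Prop :=
  (forall i, 0 < pi i) /\ is_series pi 1 /\
  (forall j, is_series (fun i => pi i * P i j) (pi j)).

(* surv P N n x = P_x(tau_(N) > n) where tau_(N) = inf{n >= 0 : X_n >= N}:
   the probability that X_0, ..., X_n all lie in {0,...,N-1}
   (Markov property: computed by iterating the kernel killed outside {< N}). *)
Fixpoint surv (P : nat -> nat -> R) (N n x : nat) : R :=
  match n with
  | O => if Nat.ltb x N then 1 else 0
  | S k => if Nat.ltb x N then fsum (fun z => P x z * surv P N k z) N else 0
  end.

(* Main.v *)
Require Import Defs.
From Stdlib Require Import Reals Lra Lia Arith.
From Coquelicot Require Import Coquelicot.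
Open Scope R_scope.

Lemma fsum_ext f g n : (forall k, (k < n)%nat -> f k = g k) -> fsum f n = fsum g n.
Proof. induction n; simpl; intros H; auto. rewrite IHn by (intros; apply H; lia). rewrite H by lia; auto. Qed.

Lemma fsum_le f g n : (forall k, (k < n)%nat -> f k <= g k) -> fsum f n <= fsum g n.
Proof. induction n; simpl; intros H; [lra|]. assert (f n <= g n) by (apply H; lia).
  assert (fsum f n <= fsum g n) by (apply IHn; intros; apply H; lia). lra. Qed.

Lemma fsum_nonneg f n : (forall k, 0 <= f k) -> 0 <= fsum f n.
Proof. intros H; induction n; simpl; [lra|]. specialize (H n); lra. Qed.

Lemma fsum_mono f m n : (forall k, 0 <= f k) -> (m <= n)%nat -> fsum f m <= fsum f n.
Proof. intros H Hmn; induction Hmn; simpl; [lra|]. specialize (H m0); lra. Qed.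

Lemma fsum_term f n w : (forall k, 0 <= f k) -> (w < n)%nat -> f w <= fsum f n.
Proof. intros H Hw. induction n; [lia|]. simpl. destruct (Nat.eq_dec w n).
  subst. assert (0 <= fsum f n) by (apply fsum_nonneg; auto). lra.
  assert (f w <= fsum f n) by (apply IHn; lia). specialize (H n); lra. Qed.

Lemma fsum_scal c f n : fsum (fun k => c * f k) n = c * fsum f n.
Proof. induction n; simpl; [ring|]. rewrite IHn; ring. Qed.

Lemma fsum_plus f g n : fsum (fun k => f k + g k) n = fsum f n + fsum g n.
Proof. induction n; simpl; [ring|]. rewrite IHn; ring. Qed.

Lemma sum_n_fsum (a : nat -> R) m : sum_n a m = fsum a (S m).
Proof. induction m. rewrite sum_O. simpl. symmetry; apply Rplus_0_l.
  rewrite sum_Sn, IHm. simpl. reflexivity. Qed.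

Lemma is_series_lim (a : nat -> R) l : is_series a l -> is_lim_seq (sum_n a) l.
Proof. intros H. exact H. Qed.

Lemma series_partial_le a l n : (forall k, 0 <= a k) -> is_series a l -> fsum a n <= l.
Proof.
  intros Hpos Hs. destruct (Rle_or_lt (fsum a n) l) as [h|h]; auto.
  exfalso. apply is_series_lim, is_lim_seq_spec in Hs.
  destruct (Hs (mkposreal _ (Rlt_Rminus _ _ h))) as [M HM].
  specialize (HM (M + n)%nat ltac:(lia)). simpl in HM.
  rewrite sum_n_fsum in HM.
  assert (fsum a n <= fsum a (S (M + n))) by (apply fsum_mono; auto; lia).
  apply Rabs_lt_between' in HM. lra.
Qed.

Lemma series_partial_ge a l eps : 0 < eps -> is_series a l -> exists M, forall m, (M <= m)%nat -> l - eps <= fsum a m.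
Proof.
  intros He Hs. apply is_series_lim, is_lim_seq_spec in Hs.
  destruct (Hs (mkposreal _ He)) as [M HM]. exists (S M). intros m Hm.
  destruct m; [lia|]. specialize (HM m ltac:(lia)). simpl in HM.
  rewrite sum_n_fsum in HM. apply Rabs_lt_between' in HM. lra.
Qed.

Lemma is_series_zero : is_series (fun _ : nat => 0) 0.
Proof. apply (is_lim_seq_spec (sum_n (fun _ : nat => 0)) 0). intros eps. exists O. intros n _.
  assert (sum_n (fun _ : nat => 0) n = 0).
  { rewrite sum_n_fsum. induction (S n); simpl; auto. rewrite IHn0; ring. }
  simpl. rewrite H. rewrite Rminus_0_r, Rabs_R0. apply cond_pos. Qed.

Lemma series_fsum (a : nat -> nat -> R) b N :
  (forall w, is_series (fun x => a x w) (b w)) ->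
  is_series (fun x => fsum (a x) N) (fsum b N).
Proof. intros H. induction N; simpl. apply is_series_zero.
  apply (is_series_plus _ _ _ _ IHN (H N)). Qed.
Fixpoint kill (P : nat -> nat -> R) (D : nat -> bool) (N n x : nat) : R :=
  match n with
  | O => if D x then 1 else 0
  | S k => if D x then fsum (fun z => P x z * kill P D N k z) N else 0
  end.

Lemma surv_kill P N n x : surv P N n x = kill P (fun u => Nat.ltb u N) N n x.
Proof. revert x; induction n; intros x; simpl; auto.
  destruct (Nat.ltb x N); auto. apply fsum_ext; intros. rewrite IHn; auto. Qed.

Lemma row_le1 P x N : stochastic P -> fsum (P x) N <= 1.
Proof. intros [H0 H1]. apply series_partial_le; auto. Qed.

Lemma kill_nonneg P D N n x : stochastic P -> 0 <= kill P D N n x.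
Proof. intros Hs. revert x; induction n; intros x; simpl; destruct (D x); try lra.
  apply fsum_nonneg. intros k. apply Rmult_le_pos; auto. apply Hs. Qed.

Lemma kill_le1 P D N n x : stochastic P -> kill P D N n x <= 1.
Proof. intros Hs. revert x; induction n; intros x; simpl; destruct (D x); try lra.
  apply Rle_trans with (fsum (P x) N); [|apply row_le1; auto].
  apply fsum_le. intros k _. specialize (IHn k). pose proof (proj1 Hs x k).
  pose proof (kill_nonneg P D N n k Hs). nra. Qed.

Lemma kill_decr P D N n x : stochastic P -> kill P D N (S n) x <= kill P D N n x.
Proof. intros Hs. revert x; induction n; intros x.
  - simpl. destruct (D x); [|lra].
    apply Rle_trans with (fsum (P x) N); [|apply row_le1; auto].
    apply fsum_le. intros k _. pose proof (proj1 Hs x k). destruct (D k); nra.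
  - change (kill P D N (S (S n)) x) with (if D x then fsum (fun z => P x z * kill P D N (S n) z) N else 0).
    change (kill P D N (S n) x) with (if D x then fsum (fun z => P x z * kill P D N n z) N else 0).
    destruct (D x); [|lra]. apply fsum_le. intros k _. pose proof (proj1 Hs x k).
    specialize (IHn k). nra. Qed.

Lemma kill_decr_le P D N m n x : stochastic P -> (m <= n)%nat -> kill P D N n x <= kill P D N m x.
Proof. intros Hs H; induction H; [lra|]. pose proof (kill_decr P D N m0 x Hs). lra. Qed.

Inductive bpath (P : nat -> nat -> R) (Q : nat -> Prop) : nat -> nat -> Prop :=
  | bp_refl x : Q x -> bpath P Q x x
  | bp_step x w z : Q x -> 0 < P x w -> bpath P Q w z -> bpath P Q x z.

Lemma bpath_start P Q x z : bpath P Q x z -> Q x.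
Proof. destruct 1; auto. Qed.

Lemma bpath_bound P Q x z : bpath P Q x z -> exists B, bpath P (fun u => Q u /\ (u <= B)%nat) x z.
Proof. induction 1.
  - exists x. constructor. split; auto.
  - destruct IHbpath as [B HB]. exists (Nat.max B x).
    apply bp_step with w; auto. split; auto; lia.
    clear -HB. induction HB. constructor; intuition lia. apply bp_step with w; intuition lia.
Qed.

Lemma kill_path P Q x z : stochastic P -> bpath P Q x z ->
  exists k c, 0 < c /\ forall N D, (forall u, Q u -> D u = true) -> (forall u, D u = true -> (u < N)%nat) ->
     forall n, c * kill P D N n z <= kill P D N (n + k) x.
Proof. intros Hs. induction 1.
  - exists O, 1. split; [lra|]. intros. rewrite Nat.add_0_r. lra.
  - destruct IHbpath as [k [c [Hc HH]]]. exists (S k), (P x w * c). split; [nra|].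
    intros N D HQ HD n. rewrite Nat.add_succ_r. simpl. rewrite (HQ x H).
    specialize (HH N D HQ HD n).
    apply Rle_trans with (P x w * kill P D N (n + k) w).
    + nra.
    + apply (fsum_term (fun z => P x z * kill P D N (n + k) z)).
      intros; apply Rmult_le_pos; [apply Hs|apply kill_nonneg; auto].
      apply HD, HQ. eapply bpath_start; eauto.
Qed.

Lemma leads_bpath P x z : leads_to P x z -> bpath P (fun _ => True) x z.
Proof. induction 1. constructor; auto. econstructor; eauto. Qed.

Lemma bpath_avoid P y x z : bpath P (fun _ => True) x z -> z <> y ->
  bpath P (fun u => u <> y) x z \/ exists w, 0 < P y w /\ bpath P (fun u => u <> y) w z.
Proof. induction 1; intros Hz.
  - left; constructor; auto.
  - destruct (IHbpath Hz) as [h|h]; [|right; auto].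
    destruct (Nat.eq_dec x y). subst. right. exists w; auto.
    left. econstructor; eauto.
Qed.
Fixpoint hit (P : nat -> nat -> R) (y N n x : nat) : R :=
  match n with
  | O => if Nat.eqb x y then 1 else 0
  | S k => if Nat.eqb x y then 1 else
           if Nat.ltb x N then fsum (fun w => P x w * hit P y N k w) N else 0
  end.

Lemma hit_nonneg P y N n x : stochastic P -> 0 <= hit P y N n x.
Proof. intros Hs. revert x; induction n; intros x; simpl; destruct (Nat.eqb x y); try lra.
  destruct (Nat.ltb x N); try lra. apply fsum_nonneg. intros k. apply Rmult_le_pos; auto. apply Hs. Qed.

Lemma hit_incr P y N n x : stochastic P -> hit P y N n x <= hit P y N (S n) x.
Proof. intros Hs. revert x; induction n; intros x.
  - simpl. destruct (Nat.eqb x y); [lra|]. destruct (Nat.ltb x N); [|lra].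
    apply fsum_nonneg. intros k. pose proof (proj1 Hs x k). destruct (Nat.eqb k y); lra.
  - change (hit P y N (S (S n)) x) with (if Nat.eqb x y then 1 else
           if Nat.ltb x N then fsum (fun w => P x w * hit P y N (S n) w) N else 0).
    change (hit P y N (S n) x) with (if Nat.eqb x y then 1 else
           if Nat.ltb x N then fsum (fun w => P x w * hit P y N n w) N else 0).
    destruct (Nat.eqb x y); [lra|]. destruct (Nat.ltb x N); [|lra].
    apply fsum_le. intros k _. pose proof (proj1 Hs x k). specialize (IHn k). nra. Qed.

Lemma hit_incr_le P y N m n x : stochastic P -> (m <= n)%nat -> hit P y N m x <= hit P y N n x.
Proof. intros Hs H; induction H; [lra|]. pose proof (hit_incr P y N m0 x Hs). lra. Qed.

Definition Dlt (N : nat) : nat -> bool := fun u => Nat.ltb u N.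
Definition Dv (N y : nat) : nat -> bool := fun u => andb (Nat.ltb u N) (negb (Nat.eqb u y)).

Lemma main_ineq P y N n x : stochastic P ->
  hit P y N n x * kill P (Dlt N) N n y <= kill P (Dlt N) N n x.
Proof. intros Hs. revert x; induction n; intros x.
  - destruct (Nat.eqb x y) eqn:E. apply Nat.eqb_eq in E; subst; simpl; rewrite Nat.eqb_refl; lra.
    simpl. rewrite E. destruct (Dlt N y), (Dlt N x); lra.
  - destruct (Nat.eqb x y) eqn:E. apply Nat.eqb_eq in E; subst.
    assert (hit P y N (S n) y = 1) as -> by (simpl; rewrite Nat.eqb_refl; auto). lra.
    pose proof (kill_decr P (Dlt N) N n y Hs) as Hd.
    pose proof (kill_nonneg P (Dlt N) N (S n) y Hs) as Hn.
    change (hit P y N (S n) x) with (if Nat.eqb x y then 1 else if Nat.ltb x N then fsum (fun w => P x w * hit P y N n w) N else 0).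
    change (kill P (Dlt N) N (S n) x) with (if Dlt N x then fsum (fun z => P x z * kill P (Dlt N) N n z) N else 0).
    rewrite E. change (Dlt N x) with (Nat.ltb x N). destruct (Nat.ltb x N); [|lra].
    apply Rle_trans with (fsum (fun w => P x w * hit P y N n w) N * kill P (Dlt N) N n y).
    + apply Rmult_le_compat_l; [|exact Hd]. apply fsum_nonneg; intros; apply Rmult_le_pos; [apply Hs|apply hit_nonneg; auto].
    + rewrite Rmult_comm, <- fsum_scal. apply fsum_le. intros k _. specialize (IHn k).
      pose proof (proj1 Hs x k). nra.
Qed.

Lemma cover P y N n x : stochastic P ->
  kill P (Dlt N) N n x <= hit P y N n x + kill P (Dv N y) N n x.
Proof. intros Hs. revert x; induction n; intros x.
  - simpl. unfold Dlt, Dv. destruct (Nat.eqb x y); destruct (Nat.ltb x N); simpl; lra.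
  - change (hit P y N (S n) x) with (if Nat.eqb x y then 1 else if Nat.ltb x N then fsum (fun w => P x w * hit P y N n w) N else 0).
    change (kill P (Dlt N) N (S n) x) with (if Dlt N x then fsum (fun z => P x z * kill P (Dlt N) N n z) N else 0).
    change (kill P (Dv N y) N (S n) x) with (if Dv N y x then fsum (fun z => P x z * kill P (Dv N y) N n z) N else 0).
    change (Dlt N x) with (Nat.ltb x N). change (Dv N y x) with (andb (Nat.ltb x N) (negb (Nat.eqb x y))).
    destruct (Nat.eqb x y) eqn:E.
    + pose proof (kill_le1 P (Dlt N) N (S n) x Hs). simpl in H. rewrite Bool.andb_false_r.
      change (Dlt N x) with (Nat.ltb x N) in H. lra.
    + simpl. rewrite Bool.andb_true_r. destruct (Nat.ltb x N); [|lra].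
      rewrite <- fsum_plus. apply fsum_le. intros k _. specialize (IHn k). pose proof (proj1 Hs x k). nra.
Qed.

Lemma surv_to_1 P n : stochastic P -> forall x eps, 0 < eps ->
  exists N0, forall N, (N0 <= N)%nat -> 1 - eps <= kill P (Dlt N) N n x.
Proof. intros Hs. induction n; intros x eps He.
  - exists (S x). intros N HN. simpl. unfold Dlt. replace (Nat.ltb x N) with true. lra.
    symmetry; apply Nat.ltb_lt; lia.
  - destruct (series_partial_ge (P x) 1 (eps/2) ltac:(lra) (proj2 Hs x)) as [M HM].
    assert (Hu : forall M', exists N1, forall N, (N1 <= N)%nat -> forall w, (w < M')%nat -> 1 - eps/2 <= kill P (Dlt N) N n w).
    { induction M'. exists O. intros; lia.
      destruct IHM' as [N1 HN1]. destruct (IHn M' (eps/2) ltac:(lra)) as [N2 HN2].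
      exists (Nat.max N1 N2). intros N HN w Hw. destruct (Nat.eq_dec w M'). subst; apply HN2; lia.
      apply HN1; lia. }
    destruct (Hu M) as [N1 HN1]. exists (Nat.max (S x) (Nat.max M N1)). intros N HN.
    simpl. unfold Dlt at 1. replace (Nat.ltb x N) with true by (symmetry; apply Nat.ltb_lt; lia).
    specialize (HM M (le_n _)).
    apply Rle_trans with (fsum (fun z => P x z * kill P (Dlt N) N n z) M).
    + apply Rle_trans with (fsum (fun z => P x z * (1 - eps/2)) M).
      * rewrite (fsum_ext _ (fun z => (1 - eps/2) * P x z)) by (intros; ring). rewrite fsum_scal.
        pose proof (row_le1 P x M Hs). nra.
      * apply fsum_le. intros k Hk. apply Rmult_le_compat_l. apply Hs. apply HN1; lia.
    + apply fsum_mono; [|lia]. intros k; apply Rmult_le_pos; [apply Hs|apply kill_nonneg; auto].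
Qed.
Lemma fsum_S f n : fsum f (S n) = fsum f n + f n.
Proof. reflexivity. Qed.

Lemma tele P pi y N n : stochastic P -> stationary_distribution P pi -> (y < N)%nat ->
  fsum (fun x => pi x * kill P (Dv N y) N (S n) x) N
  + pi y * fsum (fun w => P y w * kill P (Dv N y) N n w) N
  <= fsum (fun x => pi x * kill P (Dv N y) N n x) N.
Proof.
  intros Hs [Hpi [Hpi1 Hstat]] HyN.
  set (g := fun x => fsum (fun w => P x w * kill P (Dv N y) N n w) N).
  assert (Hser : is_series (fun x => pi x * g x) (fsum (fun w => pi w * kill P (Dv N y) N n w) N)).
  { apply is_series_ext with (fun x => fsum (fun w => pi x * P x w * kill P (Dv N y) N n w) N).
    - intros x. unfold g. rewrite <- fsum_scal. apply fsum_ext; intros; ring.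
    - apply (series_fsum (fun x w => pi x * P x w * kill P (Dv N y) N n w)).
      intros w. apply (is_series_scal_r (kill P (Dv N y) N n w) (fun i => pi i * P i w) (pi w)). apply Hstat. }
  assert (Hg : forall x, 0 <= g x).
  { intros x. apply fsum_nonneg. intros; apply Rmult_le_pos; [apply Hs|apply kill_nonneg; auto]. }
  assert (Hle : fsum (fun x => pi x * g x) N <= fsum (fun w => pi w * kill P (Dv N y) N n w) N).
  { apply series_partial_le; auto. intros k. apply Rmult_le_pos; [left; apply Hpi|apply Hg]. }
  assert (Hind : forall M, (M <= N)%nat ->
     fsum (fun x => pi x * kill P (Dv N y) N (S n) x) M + (if Nat.ltb y M then pi y * g y else 0)
     <= fsum (fun x => pi x * g x) M).
  { induction M; intros HM.
    - simpl. lra.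
    - specialize (IHM ltac:(lia)). rewrite !fsum_S.
      change (kill P (Dv N y) N (S n) M) with (if Dv N y M then g M else 0).
      change (Dv N y M) with (andb (Nat.ltb M N) (negb (Nat.eqb M y))).
      replace (Nat.ltb M N) with true by (symmetry; apply Nat.ltb_lt; lia).
      destruct (Nat.eq_dec M y).
      + subst. rewrite Nat.eqb_refl. cbn [andb negb].
        replace (Nat.ltb y (S y)) with true by (symmetry; apply Nat.ltb_lt; lia).
        replace (Nat.ltb y y) with false in IHM by (symmetry; apply Nat.ltb_ge; lia). lra.
      + replace (Nat.eqb M y) with false by (symmetry; apply Nat.eqb_neq; auto). cbn [andb negb].
        replace (Nat.ltb y (S M)) with (Nat.ltb y M).
        * destruct (Nat.ltb y M); lra.
        * destruct (Nat.ltb y M) eqn:E1; symmetry.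
          apply Nat.ltb_lt in E1; apply Nat.ltb_lt; lia.
          apply Nat.ltb_ge in E1; apply Nat.ltb_ge; lia. }
  specialize (Hind N (le_n _)).
  replace (Nat.ltb y N) with true in Hind by (symmetry; apply Nat.ltb_lt; lia).
  unfold g in *. lra.
Qed.

Lemma tele_sum P pi y N : stochastic P -> stationary_distribution P pi -> (y < N)%nat ->
  forall M, pi y * INR M * fsum (fun w => P y w * kill P (Dv N y) N M w) N <= 1.
Proof.
  intros Hs Hst HyN.
  set (a := fun k => fsum (fun x => pi x * kill P (Dv N y) N k x) N).
  set (q := fun k => fsum (fun w => P y w * kill P (Dv N y) N k w) N).
  destruct Hst as [Hpi [Hpi1 Hstat]].
  assert (Hall : forall M, a M + pi y * INR M * q M <= a O).
  { induction M. simpl. lra.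
    pose proof (tele P pi y N M Hs (conj Hpi (conj Hpi1 Hstat)) HyN). fold (a M) (a (S M)) (q M) in H.
    assert (q (S M) <= q M).
    { apply fsum_le. intros k _. pose proof (proj1 Hs y k). pose proof (kill_decr P (Dv N y) N M k Hs). nra. }
    assert (0 <= q (S M)) by (apply fsum_nonneg; intros; apply Rmult_le_pos; [apply Hs|apply kill_nonneg; auto]).
    pose proof (Hpi y). pose proof (pos_INR M). rewrite S_INR.
    assert (pi y * (INR M + 1) * q (S M) <= pi y * (INR M + 1) * q M) by (apply Rmult_le_compat_l; nra).
    unfold a, q in *. lra. }
  intros M. specialize (Hall M).
  assert (0 <= a M) by (apply fsum_nonneg; intros; apply Rmult_le_pos; [left; apply Hpi|apply kill_nonneg; auto]).
  assert (a O <= 1).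
  { apply Rle_trans with (fsum pi N). apply fsum_le. intros k _. pose proof (Hpi k).
    pose proof (kill_le1 P (Dv N y) N O k Hs). pose proof (kill_nonneg P (Dv N y) N O k Hs). nra.
    apply series_partial_le; auto. intros; left; apply Hpi. }
  fold (q M). lra.
Qed.

Lemma kill_step P D N m x w : stochastic P -> D x = true -> (w < N)%nat ->
  P x w * kill P D N m w <= kill P D N (S m) x.
Proof. intros Hs Hx Hw. simpl. rewrite Hx.
  apply (fsum_term (fun z => P x z * kill P D N m z)); auto.
  intros; apply Rmult_le_pos; [apply Hs|apply kill_nonneg; auto]. Qed.

Lemma fsum_pos_term f M : 0 < fsum f M -> exists k, (k < M)%nat /\ 0 < f k.
Proof. induction M; simpl; intros H. lra.
  destruct (Rlt_or_le 0 (f M)). exists M; split; auto.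
  destruct IHM as [k [Hk Hf]]. lra. exists k; split; auto. Qed.

Lemma hit_self P y N n : hit P y N n y = 1.
Proof. destruct n; simpl; rewrite Nat.eqb_refl; auto. Qed.

Lemma recur P pi y z d : stochastic P -> irreducible P -> stationary_distribution P pi -> 0 < d ->
  exists n0 N0, forall n N, (n0 <= n)%nat -> (N0 <= N)%nat -> 1 - d <= hit P y N n z.
Proof.
  intros Hs Hirr Hst Hd.
  destruct (Nat.eq_dec z y) as [->|Hzy].
  { exists O, O. intros. rewrite hit_self. lra. }
  destruct (bpath_avoid P y y z (leads_bpath P y z (Hirr y z)) Hzy) as [H|[w [Hw Hp]]].
  { apply bpath_start in H. tauto. }
  destruct (bpath_bound _ _ _ _ Hp) as [B HB].
  destruct (kill_path _ _ _ _ Hs HB) as [k [c [Hc Hk]]].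
  pose proof (proj1 Hst y) as Hpy.
  set (C := pi y * P y w * c).
  assert (HC : 0 < C) by (unfold C; repeat apply Rmult_lt_0_compat; auto).
  destruct (INR_unbounded (2 / (C * d))) as [n0 Hn0].
  assert (Hv : forall N, (S (Nat.max B y) <= N)%nat -> kill P (Dv N y) N n0 z <= d / 2).
  { intros N HN.
    assert (HQ : forall u, u <> y /\ (u <= B)%nat -> Dv N y u = true).
    { intros u [h1 h2]. unfold Dv. replace (Nat.ltb u N) with true by (symmetry; apply Nat.ltb_lt; lia).
      replace (Nat.eqb u y) with false by (symmetry; apply Nat.eqb_neq; auto). auto. }
    assert (HD : forall u, Dv N y u = true -> (u < N)%nat).
    { intros u h. unfold Dv in h. apply andb_prop in h. apply Nat.ltb_lt, h. }
    specialize (Hk N (Dv N y) HQ HD n0).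
    assert (Hw' : (w < N)%nat) by (apply HD, HQ; exact (bpath_start _ _ _ _ HB)).
    pose proof (fsum_term (fun u => P y u * kill P (Dv N y) N (n0 + k) u) N w) as Ht.
    simpl in Ht. specialize (Ht ltac:(intros; apply Rmult_le_pos; [apply Hs|apply kill_nonneg; auto]) Hw').
    pose proof (tele_sum P pi y N Hs Hst ltac:(lia) (n0 + k)) as Hts.
    pose proof (le_INR n0 (n0 + k) ltac:(lia)) as Hi.
    pose proof (kill_nonneg P (Dv N y) N n0 z Hs) as Hv0.
    pose proof (kill_nonneg P (Dv N y) N (n0+k) w Hs) as Hv1.
    assert (Hq : 0 <= fsum (fun u => P y u * kill P (Dv N y) N (n0 + k) u) N)
      by (apply fsum_nonneg; intros; apply Rmult_le_pos; [apply Hs|apply kill_nonneg; auto]).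
    set (v := kill P (Dv N y) N n0 z) in *.
    set (q := fsum (fun u => P y u * kill P (Dv N y) N (n0 + k) u) N) in *.
    assert (H1 : C * INR n0 * v <= 1).
    { unfold C. apply Rle_trans with (pi y * INR (n0 + k) * q); [|exact Hts].
      apply Rle_trans with (pi y * INR n0 * (P y w * kill P (Dv N y) N (n0 + k) w)).
      - assert (pi y * INR n0 * (P y w * (c * v)) <= pi y * INR n0 * (P y w * kill P (Dv N y) N (n0 + k) w)).
        { apply Rmult_le_compat_l. pose proof (pos_INR n0); nra. apply Rmult_le_compat_l; lra. }
        nra.
      - apply Rle_trans with (pi y * INR n0 * q). apply Rmult_le_compat_l; [pose proof (pos_INR n0); nra|lra].
        apply Rmult_le_compat_r; [lra|]. apply Rmult_le_compat_l; lra. }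
    assert (H2 : 2 / d < C * INR n0).
    { apply Rmult_lt_compat_l with (r := C) in Hn0; auto.
      replace (C * (2 / (C * d))) with (2 / d) in Hn0 by (field; lra). lra. }
    assert (H3 : 0 < 2 / d) by (apply Rdiv_lt_0_compat; lra).
    assert (2 / d * v <= 1) by nra.
    replace (2 / d * v) with (v * 2 / d) in H by (field; lra).
    apply Rmult_le_compat_r with (r := d) in H; [|lra].
    replace (v * 2 / d * d) with (v * 2) in H by (field; lra). lra. }
  destruct (surv_to_1 P n0 Hs z (d/2) ltac:(lra)) as [N1 HN1].
  exists n0, (Nat.max (S (Nat.max B y)) N1). intros n N Hn HN.
  apply Rle_trans with (hit P y N n0 z); [|apply hit_incr_le; auto].
  pose proof (cover P y N n0 z Hs). specialize (HN1 N ltac:(lia)). specialize (Hv N ltac:(lia)). lra.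
Qed.

Lemma surv_pos P z : stochastic P -> irreducible P ->
  exists N0, forall N, (N0 <= N)%nat -> forall n, 0 < kill P (Dlt N) N n z.
Proof.
  intros Hs Hirr.
  destruct (series_partial_ge (P z) 1 (1/2) ltac:(lra) (proj2 Hs z)) as [M HM].
  destruct (fsum_pos_term (P z) M) as [w [_ Hw]]. specialize (HM M (le_n _)). lra.
  pose proof (leads_bpath P w z (Hirr w z)) as Hp.
  destruct (bpath_bound _ _ _ _ Hp) as [B HB].
  destruct (kill_path _ _ _ _ Hs HB) as [k [c [Hc Hk]]].
  exists (S (Nat.max B (Nat.max w z))). intros N HN n.
  assert (HD : forall u, Dlt N u = true -> (u < N)%nat) by (intros u h; apply Nat.ltb_lt, h).
  assert (HQ : forall u, True /\ (u <= B)%nat -> Dlt N u = true) by (intros u [_ h]; apply Nat.ltb_lt; lia).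
  specialize (Hk N (Dlt N) HQ HD).
  set (K := S (k)).
  assert (Hstep : forall m, P z w * c * kill P (Dlt N) N m z <= kill P (Dlt N) N (m + K) z).
  { intros m. unfold K. rewrite Nat.add_succ_r.
    pose proof (kill_step P (Dlt N) N (m + k) z w Hs ltac:(apply Nat.ltb_lt; lia) ltac:(lia)).
    specialize (Hk m). pose proof (proj1 Hs z w). nra. }
  assert (Hj : forall j, (P z w * c) ^ j <= kill P (Dlt N) N (j * K) z).
  { induction j. simpl. unfold Dlt. replace (Nat.ltb z N) with true by (symmetry; apply Nat.ltb_lt; lia). lra.
    replace (S j * K)%nat with (j * K + K)%nat by lia. simpl pow.
    specialize (Hstep (j * K)%nat). assert (0 < P z w * c) by nra. nra. }
  apply Rlt_le_trans with ((P z w * c) ^ n).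
  apply pow_lt; nra.
  apply Rle_trans with (kill P (Dlt N) N (n * K) z); auto.
  apply kill_decr_le; auto. unfold K; nia.
Qed.

Theorem lemma2 (P : nat -> nat -> R) (pi : nat -> R) :
  stochastic P -> monotone_kernel P -> irreducible P ->
  stationary_distribution P pi ->
  forall y z : nat,
    filterlim (fun nN : nat * nat => surv P (snd nN) (fst nN) y / surv P (snd nN) (fst nN) z)
      (filter_prod eventually eventually) (locally 1).
Proof.
  intros Hs _ Hirr Hst y z.
  apply filterlim_locally. intros [eps Heps]. simpl.
  set (d := Rmin (1/2) (eps/4)).
  assert (Hd : 0 < d) by (unfold d; apply Rmin_glb_lt; lra).
  assert (Hd1 : d <= 1/2) by apply Rmin_l.
  assert (Hd2 : d <= eps/4) by apply Rmin_r.
  destruct (recur P pi y z d Hs Hirr Hst Hd) as [n1 [N1 H1]].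
  destruct (recur P pi z y d Hs Hirr Hst Hd) as [n2 [N2 H2]].
  destruct (surv_pos P z Hs Hirr) as [N3 H3].
  apply Filter_prod with (fun n => (Nat.max n1 n2 <= n)%nat) (fun N => (Nat.max N1 (Nat.max N2 N3) <= N)%nat).
  - exists (Nat.max n1 n2). auto.
  - exists (Nat.max N1 (Nat.max N2 N3)). auto.
  - intros n N Hn HN. simpl. rewrite !surv_kill.
    change (fun u => Nat.ltb u N) with (Dlt N).
    specialize (H1 n N ltac:(lia) ltac:(lia)).
    specialize (H2 n N ltac:(lia) ltac:(lia)).
    specialize (H3 N ltac:(lia) n).
    pose proof (main_ineq P y N n z Hs) as M1.
    pose proof (main_ineq P z N n y Hs) as M2.
    set (A := kill P (Dlt N) N n y) in *.
    set (B := kill P (Dlt N) N n z) in *.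
    assert (HA : 0 <= A) by apply kill_nonneg, Hs.
    assert (E1 : (1 - d) * A <= B) by nra.
    assert (E2 : (1 - d) * B <= A) by nra.
    set (r := A / B).
    assert (HAr : A = r * B) by (unfold r; field; lra).
    rewrite HAr in E1, E2.
    assert (R1 : 1 - d <= r).
    { apply Rmult_le_reg_r with B; [auto|lra]. }
    assert (R2 : (1 - d) * r <= 1).
    { apply Rmult_le_reg_r with B; [auto|lra]. }
    change (Rabs (r - 1) < eps).
    apply Rabs_lt_between'. split; nra.
Qed.
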